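(* Let $d\ge3$, $c\in\mathbb{Z}^+$, and $\phi_{(d,c)}(x)=x^d-cdx^{d-1}+c(d-1)$. Then the forward orbit $\{\phi_{(d,c)}^n(0):n\ge0\}$ of $0$ under $\phi_{(d,c)}$ is infinite.
   Context: $\phi^n$ denotes the $n$-fold iterate. *)

(* Defs.v *)
From mathcomp Require Import all_boot all_order all_algebra.
Set Implicit Arguments. Unset Strict Implicit. Unset Printing Implicit Defensive.
Import Order.TTheory GRing.Theory Num.Theory.
Local Open Scope ring_scope.

Definition phi (d : nat) (c : int) (x : int) : int :=
  x ^+ d - c * d%:R * x ^+ d.-1 + c * (d.-1)%:R.

Definition finite_orbit (f : int -> int) (x0 : int) : Prop :=
  exists s : seq int, forall n : nat, iter n f x0 \in s.

(* Main.v *)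
Require Import Defs.
From mathcomp Require Import all_boot all_order all_algebra.
From mathcomp Require Import zify ring.
Import GRing.Theory Num.Theory.
Local Open Scope ring_scope.

Lemma phi_eq (k : nat) (c x : int) :
  phi k.+3 c x = x * x * x ^+ k * (x - c * (k.+3)%:R) + c * (k.+2)%:R.
Proof. rewrite /phi /= !exprS. ring. Qed.

Definition Q (k : nat) (c x : int) := x <= -2 \/ c * (k.+3)%:R + 1 <= x.

Lemma step (k : nat) (c x : int) (hc : 0 < c) : Q k c x ->
  Q k c (phi k.+3 c x) /\ (`|x|.+1 <= `|phi k.+3 c x|)%N.
Proof.
rewrite /Q phi_eq.
set D : int := (k.+3)%:R.
have HD : (k.+2)%:R = D - 1 :> int by rewrite /D; lia.
have HD3 : 3 <= D by rewrite /D; lia.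
rewrite HD.
case=> hx.
- have [m [->|->]] : exists m, k = (2 * m)%N \/ k = (2 * m).+1.
    exists k./2; have := odd_double_half k; rewrite -muln2.
    by case: (odd k) => /= h; [right|left]; lia.
  + rewrite exprM.
    have hs : 1 <= (x ^+ 2) ^+ m by apply: exprn_ege1; nia.
    set s := (x ^+ 2) ^+ m in hs *.
    set u := x * x * s.
    have hu : 4 <= u by rewrite /u; nia.
    split; [left|]; nia.
  + rewrite exprS exprM.
    have hs : 1 <= (x ^+ 2) ^+ m by apply: exprn_ege1; nia.
    set s := (x ^+ 2) ^+ m in hs *.
    have -> : x * x * (x * s) * (x - c * D) = (x * x * s) * (x * (x - c * D)) by ring.
    set u := x * x * s.
    have hu : 4 <= u by rewrite /u; nia.
    set w := x * (x - c * D).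
    have hw : - x + c * D + 2 <= w by rewrite /w; nia.
    split; [right|]; nia.
- have hs : 1 <= x ^+ k by apply: exprn_ege1; nia.
  set s := x ^+ k in hs *.
  set u := x * x * s.
  have hu : x <= u by rewrite /u; nia.
  split; [right|]; nia.
Qed.

Theorem lemma5p1 (d : nat) (c : int) (hd : (3 <= d)%N) (hc : 0 < c) :
  ~ finite_orbit (phi d c) 0.
Proof.
case: d hd => [|[|[|k]]] // _ [s Hs].
have bnd : forall y, y \in s -> (`|y| <= \sum_(z <- s) `|z|)%N.
  elim: s {Hs} => [|a s IH] y //.
  rewrite in_cons big_cons => /orP [/eqP ->|/IH]; lia.
set M := (\sum_(z <- s) `|z|)%N in bnd.
set f := phi k.+3 c.
have x1 : iter 1 f 0%R = c * (k.+2)%:R by rewrite /= /f phi_eq; ring.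
have x2 : Q k c (iter 2 f 0%R) /\ (2 <= `|iter 2 f 0%R|)%N.
  rewrite iterS x1 /f phi_eq.
  set a := c * (k.+2)%:R.
  have ha : 2 <= a by rewrite /a; nia.
  have ht : 1 <= a ^+ k by apply: exprn_ege1; nia.
  set t := a ^+ k in ht *.
  have -> : a - c * (k.+3)%:R = - c by rewrite /a; lia.
  have htc : 1 <= t * c by nia.
  have h1 : a * a <= a * a * (t * c) by rewrite -{1}(mulr1 (a * a)); apply: ler_wpM2l; nia.
  have h2 : 2 * a <= a * a by nia.
  have hh : a * a * t * - c + a <= -2.
    have -> : a * a * t * - c = - (a * a * (t * c)) by ring.
    lia.
  by rewrite /Q; split; [left|]; nia.
have main : forall n, Q k c (iter n.+2 f 0%R) /\ (n.+2 <= `|iter n.+2 f 0%R|)%N.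
  elim=> [|n [IH1 IH2]] //.
  have [h1 h2] := @step k c (iter n.+2 f 0%R) hc IH1.
  change (Q k c (f (iter n.+2 f 0%R)) /\ (n.+3 <= `|f (iter n.+2 f 0%R)|)%N).
  move: (iter n.+2 f 0%R) IH2 h1 h2 => y; rewrite /f => *; split => //; lia.
have [_ h] := main M.
have h' : (`|iter M.+2 f 0%R| <= M)%N := bnd _ (Hs M.+2).
lia.
Qed.
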